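(* Let $E$ be a real Banach space, $K\subset E$ nonempty closed convex, $Y$ a real Banach space containing a closed, convex, pointed cone $C$ with nonempty interior, $g\in\mathcal F$ satisfying H1–H4, $T:K\to\mathcal P(K)$ satisfying B4, and $f:E\times E\to Y$ satisfying B1–B3. Let $v\in K$, $x\in T(v)$, $\beta>0$ and $e\in\mathrm{int}(C)$. If $$z\in\mathrm{argmin}^C_w\{\beta f(x,y)+g(y)e-\langle y,g'(x)\rangle e: y\in T(v)\},$$ then there exists $c\in C^+\setminus\{0\}$ such that $$\langle y-z,g'(x)-g'(z)\rangle\langle e,c\rangle\le\beta\big[\langle f(x,y),c\rangle-\langle f(x,z),c\rangle\big]\quad\text{for all }y\in T(v).$$
   Context: $C^+=\{z\in Y^*:\langle y,z\rangle\ge0\ \forall y\in C\}$; $y\preceq y'$ iff $y'-y\in C$; $G$ is $C$-convex if $G(tx+(1-t)y)\preceq tG(x)+(1-t)G(y)$ for all $x,y$, $t\in[0,1]$. $\mathcal F$: functions $g:E\to\mathbb R$ strictly convex, lower semicontinuous, Gâteaux differentiable with derivative $g'$. $D_g(x,y)=g(x)-g(y)-\langle x-y,g'(y)\rangle$; $v_g(x,t)=\inf\{D_g(y,x):\|y-x\|=t\}$. H1: level sets of $D_g(x,\cdot)$ bounded; H2: $\inf_{x\in A}v_g(x,t)>0$ for all $t>0$, bounded $A$; H3: $g'$ uniformly continuous on bounded sets; H4: $\lim_{\|x\|\to\infty}(g(x)-\rho\|x-z\|)=\infty$ for all $z$, $\rho>0$. $\Pi^g_D(x)$: unique minimizer of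 $D_g(\cdot,x)$ over nonempty closed convex $D$. B1: $f(x,x)=0$. B2: $f$ uniformly continuous on bounded subsets of $E\times E$. B3: $f(x,\cdot)$ $C$-convex for all $x$. B4: $T$ has nonempty closed convex values, is demiclosed ($x^k\rightharpoonup\bar x$, $d(x^k,T(x^k))\to0\Rightarrow\bar x\in T(\bar x)$), lower semicontinuous at each $\bar x\in K$ ($x^k\to\bar x$, $\bar y\in T(\bar x)\Rightarrow\exists y^k\in T(x^k)$, $y^k\to\bar y$), and quasi $D_g$-nonexpansive ($S(x)=\Pi^g_{T(x)}(x)$ has a fixed point and $D_g(p,S(x))\le D_g(p,x)$ for all fixed points $p$ of $S$ and $x\in K$). $\mathrm{argmin}^C_w\{G(y):y\in Q\}$: set of $a\in Q$ for which no $y\in Q$ satisfies $G(a)-G(y)\in\mathrm{int}(C)$. *)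

(* Defs.v *)
From HB Require Import structures.
From mathcomp Require Import all_boot all_order all_algebra.
From mathcomp Require Import all_classical all_reals all_analysis.
Set Implicit Arguments. Unset Strict Implicit. Unset Printing Implicit Defensive.
Import Order.TTheory GRing.Theory Num.Theory.
Import numFieldNormedType.Exports.
Local Open Scope classical_set_scope.
Local Open Scope ring_scope.

Section Defs.
Context {R : realType}.

Definition is_dual {X : normedModType R} (phi : X -> R) : Prop :=
  (forall (a : R) (u v : X), phi (a *: u + v) = a * phi u + phi v)
  /\ continuous phi.

Definition is_bounded {X : normedModType R} (A : set X) : Prop :=
  exists M : R, forall x, A x -> `|x| <= M.

Definition cvx_set {X : normedModType R} (A : set X) : Prop :=
  forall x y (t : R), A x -> A y -> 0 <= t <= 1 -> A (t *: x + (1 - t) *: y).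

Definition good_cone {Y : normedModType R} (C : set Y) : Prop :=
  closed C /\ cvx_set C /\
  (forall (t : R) y, 0 <= t -> C y -> C (t *: y)) /\
  (forall y, C y -> C (- y) -> y = 0) /\
  (exists y, (interior C) y).

Definition dual_cone {Y : normedModType R} (C : set Y) : set (Y -> R) :=
  [set c | is_dual c /\ forall y, C y -> 0 <= c y].

Definition cle {Y : normedModType R} (C : set Y) (y y' : Y) : Prop := C (y' - y).

Definition C_convex {X Y : normedModType R} (C : set Y) (G : X -> Y) : Prop :=
  forall x y (t : R), 0 <= t <= 1 ->
    cle C (G (t *: x + (1 - t) *: y)) (t *: G x + (1 - t) *: G y).

Definition strictly_convex {X : normedModType R} (g : X -> R) : Prop :=
  forall x y (t : R), x != y -> 0 < t < 1 ->
    g (t *: x + (1 - t) *: y) < t * g x + (1 - t) * g y.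

Definition lsc {X : normedModType R} (g : X -> R) : Prop :=
  forall x (eps : R), 0 < eps -> \forall y \near x, g x - eps < g y.

Definition gateaux_derivative {X : normedModType R} (g : X -> R) (g' : X -> X -> R) : Prop :=
  forall x, is_dual (g' x) /\
    forall h, (fun t : R => t^-1 * (g (x + t *: h) - g x)) @ 0^' --> g' x h.

Definition class_F {X : normedModType R} (g : X -> R) (g' : X -> X -> R) : Prop :=
  strictly_convex g /\ lsc g /\ gateaux_derivative g g'.

Definition Dg {X : normedModType R} (g : X -> R) (g' : X -> X -> R) (x y : X) : R :=
  g x - g y - g' y (x - y).

Definition H1 {X : normedModType R} (g : X -> R) (g' : X -> X -> R) : Prop :=
  forall x (r : R), is_bounded [set y | Dg g g' x y <= r].

(* inf_{x in A} v_g(x,t) > 0, with v_g(x,t) = inf{D_g(y,x) : ||y-x|| = t}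
   (infimum of the empty set being +oo) *)
Definition H2 {X : normedModType R} (g : X -> R) (g' : X -> X -> R) : Prop :=
  forall (t : R), 0 < t -> forall A : set X, is_bounded A ->
    exists2 delta : R, 0 < delta &
      forall x y, A x -> `|y - x| = t -> delta <= Dg g g' y x.

(* g' uniformly continuous on bounded sets (w.r.t. the dual norm) *)
Definition H3 {X : normedModType R} (g' : X -> X -> R) : Prop :=
  forall A : set X, is_bounded A -> forall eps : R, 0 < eps ->
    exists2 delta : R, 0 < delta &
      forall x y, A x -> A y -> `|x - y| < delta ->
        forall h, `|g' x h - g' y h| <= eps * `|h|.

Definition H4 {X : normedModType R} (g : X -> R) : Prop :=
  forall (z : X) (rho : R), 0 < rho -> forall M : R,
    exists N : R, forall x, N <= `|x| -> M <= g x - rho * `|x - z|.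

Definition is_bproj {X : normedModType R} (g : X -> R) (g' : X -> X -> R)
  (D : set X) (x p : X) : Prop :=
  D p /\ forall y, D y -> Dg g g' p x <= Dg g g' y x.

Definition dist_set {X : normedModType R} (x : X) (A : set X) : R :=
  inf [set `|x - a| | a in A].

Definition weak_cvg {X : normedModType R} (u : nat -> X) (l : X) : Prop :=
  forall phi : X -> R, is_dual phi -> (fun k => phi (u k)) @ \oo --> phi l.

(* condition B4 for T : K -> P(K), with S(x) = Pi^g_{T(x)}(x) *)
Definition B4 {X : normedModType R} (g : X -> R) (g' : X -> X -> R)
  (K : set X) (T : X -> set X) : Prop :=
  (forall x, K x -> [/\ T x !=set0, closed (T x) & cvx_set (T x)]) /\
  (forall (u : nat -> X) xb, (forall k, K (u k)) -> weak_cvg u xb ->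
     (fun k => dist_set (u k) (T (u k))) @ \oo --> (0 : R) -> T xb xb) /\
  (forall xb, K xb -> forall (u : nat -> X), (forall k, K (u k)) ->
     u @ \oo --> xb -> forall yb, T xb yb ->
     exists2 w : nat -> X, (forall k, T (u k) (w k)) & w @ \oo --> yb) /\
  ((exists p, K p /\ is_bproj g g' (T p) p p) /\
   forall p x s, K p -> is_bproj g g' (T p) p p -> K x -> is_bproj g g' (T x) x s ->
     Dg g g' p s <= Dg g g' p x).

Definition B1 {X Y : normedModType R} (f : X -> X -> Y) : Prop :=
  forall x, f x x = 0.

Definition B2 {X Y : normedModType R} (f : X -> X -> Y) : Prop :=
  forall M : R, forall eps : R, 0 < eps -> exists2 delta : R, 0 < delta &
    forall x y x' y', `|x| <= M -> `|y| <= M -> `|x'| <= M -> `|y'| <= M ->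
      `|x - x'| < delta -> `|y - y'| < delta -> `|f x y - f x' y'| < eps.

Definition B3 {X Y : normedModType R} (C : set Y) (f : X -> X -> Y) : Prop :=
  forall x, C_convex C (f x).

Definition wargmin {X Y : normedModType R} (C : set Y) (G : X -> Y) (Q : set X) : set X :=
  [set a | Q a /\ ~ exists y, Q y /\ (interior C) (G a - G y)].

End Defs.

(* Main.v *)
Require Import Defs.
From HB Require Import structures.
From mathcomp Require Import all_boot all_order all_algebra.
From mathcomp Require Import all_classical all_reals all_analysis.
From mathcomp Require Import ring lra.
Import Order.TTheory GRing.Theory Num.Theory.
Import numFieldNormedType.Exports.
Local Open Scope classical_set_scope.
Local Open Scope ring_scope.


Lemma small_pos (R : realType) (a r : R) : 0 <= a -> 0 < r ->
  exists2 d : R, 0 < d & d * a < r.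
Proof.
move=> a0 r0; exists (r / (a + 1)); first by rewrite divr_gt0 // ltr_wpDl.
rewrite mulrAC ltr_pdivrMr ?ltr_wpDl // ltr_pM2l //.
by rewrite ltrDl.
Qed.

Lemma le0_of_lt (R : realType) (a b : R) :
  (forall s : R, 0 < s -> a * s < b) -> a <= 0.
Proof.
move=> H; rewrite leNgt; apply/negP => a0.
have := H ((`|b| + 1) / a); rewrite divr_gt0 // ?ltr_wpDl //.
move=> /(_ isT); rewrite mulrC divfK ?gt_eqF //.
move=> h; have : `|b| + 1 < `|b| by apply: lt_le_trans h (ler_norm _).
lra.
Qed.

Lemma shuf4 (V : zmodType) (a b c d p q : V) :
  a + b + (c + d) - (p + q) = a + c - p + (b + d - q).
Proof. by rewrite [a + b + _]addrACA opprD [RHS]addrACA. Qed.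
Arguments small_pos {R a r}.
Arguments le0_of_lt {R a b}.

Lemma le0_of_lt2 (R : realType) (a b : R) : 0 < b ->
  (forall s : R, 0 < s -> a < s * b) -> a <= 0.
Proof.
move=> b0 H; rewrite leNgt; apply/negP => a0.
have := H (a / b); rewrite divr_gt0 // divfK ?gt_eqF // => /(_ isT).
by rewrite ltxx.
Qed.
Arguments le0_of_lt2 {R a b}.

Lemma z6 (V : zmodType) (X Y A B h : V) :
  X + Y - h = (X - A + (Y - B)) + (A + B - h).
Proof. by rewrite [X - A + _]addrACA -opprD -[RHS]addrA addKr. Qed.

Lemma z7 (V : zmodType) (A B h : V) : (A - h) - (B - h) = A - B.
Proof. by rewrite opprB addrA subrK. Qed.

Section dual.
Context (R : realType) (X : normedModType R) (phi : X -> R) (hp : is_dual phi).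
Lemma dual0 : phi 0 = 0.
Proof.
have := hp.1 1 0 0; rewrite scaler0 addr0 mul1r => h.
by apply: (addrI (phi 0)); rewrite addr0 -h.
Qed.
Lemma dualZ a u : phi (a *: u) = a * phi u.
Proof. by have := hp.1 a u 0; rewrite addr0 dual0 addr0. Qed.
Lemma dualD u w : phi (u + w) = phi u + phi w.
Proof. by have := hp.1 1 u w; rewrite scale1r mul1r. Qed.
Lemma dualN u : phi (- u) = - phi u.
Proof. by rewrite -scaleN1r dualZ mulN1r. Qed.
Lemma dualB u w : phi (u - w) = phi u - phi w.
Proof. by rewrite dualD dualN. Qed.
End dual.
Arguments dual0 {R X phi} hp.
Arguments dualZ {R X phi} hp a u.
Arguments dualD {R X phi} hp u w.
Arguments dualN {R X phi} hp u.
Arguments dualB {R X phi} hp u w.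
Lemma idH (R : comRingType) (V : lmodType R) (a b c w : V) (t : R) :
  t *: (a - w) + (1 - t) *: (b - w) - (c - w) = t *: a + (1 - t) *: b - c.
Proof.
have ht1 : t + (1 - t) = 1 by rewrite addrCA subrr addr0.
by rewrite !scalerBr addrACA -opprD -scalerDl ht1 scale1r z7.
Qed.


Lemma z3 (V : zmodType) (y l A B : V) : y + (- A - B) - l = y - A - l - B.
Proof. by rewrite addrA [y - A - B - l]addrAC. Qed.
Lemma z4 (V : zmodType) (y l A B : V) : l - (y - (A - B)) = l - (y - A) - B.
Proof. by rewrite !opprB [A - B - y]addrAC addrA. Qed.
Lemma z5 (V : zmodType) (y A B : V) : y - B + (A - y) = A - B.
Proof. by rewrite addrC addrA subrK addrC. Qed.

Lemma idL1 (V : zmodType) (y l a b : V) : y - b - l = (y - a - l) + (a - b).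
Proof. by rewrite [y - a - l]addrAC -[RHS]addrA addKr addrAC. Qed.
Lemma idL2 (V : zmodType) (l y a b : V) : l - (y - b) = (l - (y - a)) + (b - a).
Proof. by rewrite !opprB -[RHS]addrA; congr (_ + _); rewrite [RHS]addrC [RHS]addrA subrK. Qed.
Lemma idL3 (R : ringType) (V : lmodType R) (y l e : V) (a d : R) :
  y - (a + d) *: e - l = (y - a *: e - l) - d *: e.
Proof. by rewrite scalerDl opprD z3. Qed.
Lemma idL4 (R : ringType) (V : lmodType R) (y l e : V) (a d : R) :
  l - (y - (a - d) *: e) = (l - (y - a *: e)) - d *: e.
Proof. by rewrite scalerBl z4. Qed.
Lemma idL5 (R : ringType) (V : lmodType R) (y e : V) (t t' : R) :
  (y - t' *: e) - (y - t *: e) = (t - t') *: e.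
Proof. by rewrite opprB z5 scalerBl. Qed.
Lemma idL6 (R : comRingType) (V : lmodType R) (u w e : V) (a p q : R) :
  a *: u + w - (a * p + q) *: e = a *: (u - p *: e) + (w - q *: e).
Proof. by rewrite scalerBr scalerA scalerDl opprD [RHS]addrACA. Qed.

Lemma sep_cone (R : realType) (Y : normedModType R) (D : set Y) (e : Y) :
  (forall u, D u -> exists2 r : R, 0 < r & forall w, `|u - w| < r -> D w) ->
  D e -> (forall u w, D u -> D w -> D (u + w)) ->
  (forall (s : R) u, 0 < s -> D u -> D (s *: u)) -> ~ D 0 ->
  exists c : Y -> R, is_dual c /\ forall d, D d -> 0 < c d.
Proof.
move=> Dop De Dadd Dsc nD0.
pose P := fun L : set Y =>
  (forall (a : R) u w, L u -> L w -> L (a *: u + w)) /\ (forall u, L u -> ~ D u).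
have [L [[Lsub LD] Lmax]] : exists A, P A /\ forall B, A `<` B -> ~ P B.
  apply: Zorn_bigcup => F FP Ftot; split.
  - move=> a u w [X FX Xu] [X' FX' X'w].
    case: (Ftot X X' FX FX') => [XX'|X'X].
      by exists X' => //; apply: (FP X' FX').1 => //; exact: XX'.
    by exists X => //; apply: (FP X FX).1 => //; exact: X'X.
  - by move=> u [X FX Xu]; exact: (FP X FX).2 u Xu.
have L0 : L 0.
  case: (pselect (exists u, L u)) => [[u Lu]|nL].
    by have := Lsub (-1) u u Lu Lu; rewrite scaleN1r addNr.
  exfalso; apply: (Lmax [set 0]).
    split; first by move=> u Lu; exfalso; apply: nL; exists u.
    by move=> sub; apply: nL; exists 0; apply: sub.
  split; first by move=> a u w -> ->; rewrite scaler0 addr0.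
  by move=> u ->.
have Lsc a u : L u -> L (a *: u) by move=> Lu; have := Lsub a u 0 Lu L0; rewrite addr0.
have Ladd u w : L u -> L w -> L (u + w) by move=> Lu Lw; have := Lsub 1 u w Lu Lw; rewrite scale1r.
have LB u w : L u -> L w -> L (u - w).
  by move=> Lu Lw; apply: Ladd => //; rewrite -scaleN1r; exact: Lsc.
have tri y : [\/ L y, exists2 l, L l & D (y - l) | exists2 l, L l & D (l - y)].
  case: (pselect (L y)) => Ly; first by constructor 1.
  pose B := [set w | exists l (s : R), L l /\ w = l + s *: y].
  have nPB : ~ P B.
    apply: Lmax; split.
      by move=> u Lu; exists u, 0; rewrite scale0r addr0.
    by move=> sub; apply: Ly; apply: sub; exists 0, 1; rewrite scale1r add0r.
  have Bsub a u w : B u -> B w -> B (a *: u + w).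
    move=> [l1 [s1 [Ll1 ->]]] [l2 [s2 [Ll2 ->]]].
    exists (a *: l1 + l2), (a * s1 + s2); split; first exact: Lsub.
    by rewrite scalerDr scalerA scalerDl addrACA.
  have [u [[l [s [Ll ->]]] Dls]] : exists u, B u /\ D u.
    by apply: contrapT => H; apply: nPB; split => // u Bu Du; apply: H; exists u.
  case: (ltrgtP s 0) => [s0|s0|s0].
  - constructor 3; exists ((-s)^-1 *: l); first exact: Lsc.
    have -> : (-s)^-1 *: l - y = (-s)^-1 *: (l + s *: y).
      by rewrite scalerDr scalerA invrN mulNr mulVf ?lt_eqF // scaleN1r.
    by apply: Dsc => //; rewrite invr_gt0 oppr_gt0.
  - constructor 2; exists ((- s^-1) *: l); first exact: Lsc.
    have -> : y - (- s^-1) *: l = s^-1 *: (l + s *: y).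
      by rewrite scalerDr scalerA mulVf ?gt_eqF // scale1r scaleNr opprK addrC.
    by apply: Dsc => //; rewrite invr_gt0.
  - by exfalso; move: Dls; rewrite s0 scale0r addr0; exact: LD.
have dPN w l1 l2 : L l1 -> L l2 -> D (w - l1) -> D (l2 - w) -> False.
  move=> L1 L2 D1 D2; have := Dadd _ _ D2 D1.
  by rewrite addrA subrK; apply: LD; exact: LB.
have dPL w l : L w -> L l -> D (w - l) -> False by move=> Lw Ll; apply: LD; exact: LB.
have dNL w l : L w -> L l -> D (l - w) -> False by move=> Lw Ll; apply: LD; exact: LB.

have [r0 r0p Be] := Dop e De.
have shift w : D w -> exists2 d : R, 0 < d & D (w - d *: e).
  move=> /Dop [r rp Bw]; have [d dp dr] := small_pos (normr_ge0 e) rp.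
  by exists d => //; apply: Bw; rewrite opprB addrC subrK normrZ gtr0_norm.
have far u : exists2 s : R, 0 < s & D (s *: e + u).
  have [d dp dr] := small_pos (normr_ge0 u) r0p.
  exists d^-1; first by rewrite invr_gt0.
  have -> : d^-1 *: e + u = d^-1 *: (e + d *: u).
    by rewrite scalerDr scalerA mulVf ?gt_eqF // scale1r.
  apply: Dsc; first by rewrite invr_gt0.
  by apply: Be; rewrite opprD addrA subrr sub0r normrN normrZ gtr0_norm.
have ex y : exists t : R, L (y - t *: e).
  pose A := [set t : R | exists2 l, L l & D (y - t *: e - l)].
  pose B := [set t : R | exists2 l, L l & D (l - (y - t *: e))].
  have Adown t t' : A t -> t' <= t -> A t'.
    move=> [l Ll Dl]; rewrite le_eqVlt => /predU1P [->|tt']; first by exists l.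
    exists l => //; rewrite (idL1 _ _ _ (t *: e)) -scalerBl.
    by apply: Dadd => //; apply: Dsc => //; rewrite subr_gt0.
  have Bup t t' : B t -> t <= t' -> B t'.
    move=> [l Ll Dl]; rewrite le_eqVlt => /predU1P [<-|tt']; first by exists l.
    exists l => //; rewrite (idL2 _ _ _ (t *: e)) -scalerBl.
    by apply: Dadd => //; apply: Dsc => //; rewrite subr_gt0.
  have AB t : A t -> B t -> False.
    by move=> [l1 L1 D1] [l2 L2 D2]; exact: (dPN _ _ _ L1 L2 D1 D2).
  have Alt a b : A a -> B b -> a < b.
    by move=> Aa Bb; rewrite ltNge; apply/negP => ba; apply: (AB b) => //; exact: Adown Aa ba.
  have [s1 s1p Ds1] := far y.
  have As1 : A (- s1) by exists 0 => //; rewrite scaleNr opprK subr0 addrC.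
  have [s2 s2p Ds2] := far (- y).
  have Bs2 : B s2 by exists 0 => //; rewrite sub0r opprB.
  have hs : has_sup A.
    by split; [exists (- s1) | exists s2 => a Aa; apply/ltW/Alt].
  exists (sup A).
  case: (tri (y - sup A *: e)) => [//|[l Ll Dl]|[l Ll Dl]].
  - have [d dp Dd] := shift _ Dl.
    have Ad : A (sup A + d) by exists l => //; rewrite idL3.
    have := sup_upper_bound hs Ad; lra.
  - have [d dp Dd] := shift _ Dl.
    have Bd : B (sup A - d) by exists l => //; rewrite idL4.
    have : sup A <= sup A - d.
      by apply: ge_sup; [exists (- s1) | move=> a Aa; apply/ltW/Alt].
    lra.
have [c hc] := choice ex.
have uniq y t t' : L (y - t *: e) -> L (y - t' *: e) -> t = t'.
  move=> H H'; have := LB _ _ H' H; rewrite idL5.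
  case: (eqVneq t t') => // ne /(Lsc (t - t')^-1).
  rewrite scalerA mulVf ?subr_eq0 // scale1r => Le.
  by exfalso; apply: (LD e Le De).
have lin a u w : c (a *: u + w) = a * c u + c w.
  by apply: (uniq _ _ _ (hc _)); rewrite idL6; apply: Lsub; apply: hc.
have cpos d : D d -> 0 < c d.
  move=> Dd; rewrite ltNge; apply/negP => cd0.
  apply: (LD _ (hc d)).
  case: (eqVneq (c d) 0) => [->|ne]; first by rewrite scale0r subr0.
  have -> : d - c d *: e = d + (- c d) *: e by rewrite scaleNr.
  by apply: Dadd => //; apply: Dsc => //; rewrite oppr_gt0 lt_neqAle ne cd0.
have c0 : c 0 = 0.
  have := lin 1 0 0; rewrite scaler0 addr0 mul1r => h.
  by apply: (addrI (c 0)); rewrite addr0 -h.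
have cZ a u : c (a *: u) = a * c u by have := lin a u 0; rewrite addr0 c0 addr0.
have cD u w : c (u + w) = c u + c w by have := lin 1 u w; rewrite scale1r mul1r.
have ceP : 0 < c e := cpos e De.
have bound u : `|u| < r0 -> `|c u| < c e.
  move=> ur.
  have h1 : 0 < c (e + u).
    by apply/cpos/Be; rewrite opprD addrA subrr sub0r normrN.
  have h2 : 0 < c (e - u).
    by apply/cpos/Be; rewrite opprB addrC subrK.
  move: h1 h2; rewrite cD -scaleN1r [_ + _ *: u]addrC lin => h1 h2.
  rewrite ltr_norml; apply/andP; split; lra.
exists c; split; last exact: cpos.
split; first by move=> a u w; exact: lin.
move=> x; apply/cvgrPdist_lt => eps eps0.
apply/nbhs_normP; exists (r0 * eps / c e); first by rewrite /= divr_gt0 // mulr_gt0.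
move=> t /= xt.
have kp : 0 < c e / eps by rewrite divr_gt0.
have H : `|(c e / eps) *: (x - t)| < r0.
  rewrite normrZ gtr0_norm //.
  have -> : r0 = c e / eps * (r0 * eps / c e).
    by field; apply/andP; split; rewrite gt_eqF.
  by rewrite ltr_pM2l.
have := bound _ H; rewrite cZ normrM gtr0_norm // => h.
have h' : c e / eps * `|c (x - t)| < c e / eps * eps by rewrite divfK ?gt_eqF.
rewrite ltr_pM2l // in h'.
have -> : c x - c t = c (x - t) by rewrite -[x in c x](subrK t) cD addrK.
exact: h'.
Qed.

Theorem proposition3p3 (R : realType)
  (E : completeNormedModType R) (Y : completeNormedModType R)
  (K : set E) (C : set Y) (g : E -> R) (g' : E -> E -> R)
  (T : E -> set E) (f : E -> E -> Y)
  (hK : [/\ K !=set0, closed K & cvx_set K])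
  (hC : good_cone C)
  (hg : class_F g g') (h1 : H1 g g') (h2 : H2 g g') (h3 : H3 g') (h4 : H4 g)
  (hTK : forall x, K x -> T x `<=` K)
  (hB4 : B4 g g' K T)
  (hB1 : B1 f) (hB2 : B2 f) (hB3 : B3 C f)
  (v x : E) (beta : R) (e : Y) (z : E)
  (hv : K v) (hx : T v x) (hbeta : 0 < beta) (he : (interior C) e)
  (hz : wargmin C (fun y => beta *: f x y + g y *: e - g' x y *: e) (T v) z) :
  exists c : Y -> R, dual_cone C c /\ (exists w, c w != 0) /\
    forall y, T v y ->
      (g' x (y - z) - g' z (y - z)) * c e <= beta * (c (f x y) - c (f x z)).
Proof.
case: hC => _ [Ccvx [Cscale _]].
case: hz => Tz nz.
case: hg => gsc [_ gder].
have [_ _ Tcvx] := hB4.1 v hv.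
pose I := fun d : Y => exists2 r : R, 0 < r & forall w, `|d - w| < r -> C w.
have Iint d : I d <-> (interior C) d.
  split => [[r rp H]|].
    by apply/nbhs_normP; exists r => // w /= hw; exact: H.
  by move=> /nbhs_normP [r rp H]; exists r => // w hw; exact: H.
have IC d : I d -> C d by move=> [r rp H]; apply: H; rewrite subrr normr0.
have Ie : I e by apply/Iint.
have Cadd a b : C a -> C b -> C (a + b).
  move=> Ca Cb.
  have h : C (2^-1 *: a + (1 - 2^-1) *: b).
    by apply: Ccvx => //; apply/andP; split; lra.
  have := Cscale 2 _ (ler0n _ 2) h.
  have -> : (1 - 2^-1 : R) = 2^-1 by field.
  by rewrite -scalerDr scalerA mulfV ?pnatr_eq0 // scale1r.
have IaddC d k : I d -> C k -> I (d + k).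
  move=> [r rp H] Ck; exists r => // w hw; rewrite -(subrK k w).
  by apply: (Cadd) => //; apply: H; rewrite opprB addrA.
have Iscale s d : 0 < s -> I d -> I (s *: d).
  move=> sp [r rp H]; exists (s * r); first exact: mulr_gt0.
  move=> w hw.
  have -> : w = s *: (s^-1 *: w) by rewrite scalerA mulfV ?gt_eqF // scale1r.
  apply: (Cscale); first exact: ltW.
  apply: H.
  move: hw; rewrite (_ : s *: d - w = s *: (d - s^-1 *: w)).
    by rewrite normrZ gtr0_norm // ltr_pM2l.
  by rewrite scalerBr scalerA mulfV ?gt_eqF // scale1r.
have Iopen d : I d -> exists2 r : R, 0 < r & forall w, `|d - w| < r -> I w.
  move=> [r rp H]; exists (r / 2); first by rewrite divr_gt0.
  move=> w hw; exists (r / 2); first by rewrite divr_gt0.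
  move=> u hu; apply: H.
  have := ler_distD w d u; lra.
pose G := fun y => beta *: f x y + g y *: e - g' x y *: e.
have Gform y : G y = beta *: f x y + (g y - g' x y) *: e.
  by rewrite /G scalerBl addrA.
have gxd := (gder x).1.
have gconv y1 y2 t : 0 < t < 1 ->
    g (t *: y1 + (1 - t) *: y2) <= t * g y1 + (1 - t) * g y2.
  move=> ht; case: (eqVneq y1 y2) => [<-|ne].
    have -> : t *: y1 + (1 - t) *: y1 = y1 by rewrite -scalerDl addrCA subrr addr0 scale1r.
    lra.
  exact/ltW/gsc.
have Gconv y1 y2 t : 0 < t < 1 ->
    C (t *: G y1 + (1 - t) *: G y2 - G (t *: y1 + (1 - t) *: y2)).
  move=> ht; rewrite !Gform !scalerDr !scalerA shuf4.
  apply: (Cadd).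
    have -> : (t * beta) *: f x y1 + ((1 - t) * beta) *: f x y2 -
        beta *: f x (t *: y1 + (1 - t) *: y2) =
        beta *: (t *: f x y1 + (1 - t) *: f x y2 - f x (t *: y1 + (1 - t) *: y2)).
      by rewrite scalerBr scalerDr !scalerA [t * _]mulrC [(1 - t) * _]mulrC.
    apply: (Cscale); first exact: ltW.
    apply: hB3; apply/andP; split; lra.
  rewrite -!scalerDl -scalerBl; apply: (Cscale); last exact: IC.
  rewrite (dualD gxd) !(dualZ gxd).
  have := gconv y1 y2 t ht; lra.
pose H y := G y - G z.
have Mconv p1 p2 y1 y2 t : 0 < t < 1 -> I (p1 - H y1) -> I (p2 - H y2) ->
    I (t *: p1 + (1 - t) *: p2 - H (t *: y1 + (1 - t) *: y2)).
  move=> ht I1 I2.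
  rewrite (z6 _ _ _ (t *: H y1) ((1 - t) *: H y2)) -!scalerBr.
  apply: (IaddC).
    apply: (IaddC); first by apply: (Iscale) => //; lra.
    by apply: (Cscale); [lra | exact: IC].
  rewrite /H idH.
  exact: Gconv.
pose D := fun w : Y => exists (s : R) y, [/\ 0 < s, T v y & I (s^-1 *: w - H y)].
have Dop u : D u -> exists2 r : R, 0 < r & forall w, `|u - w| < r -> D w.
  move=> [s [y [sp Ty Iu]]]; have [r rp Hr] := Iopen _ Iu.
  exists (s * r); first exact: mulr_gt0.
  move=> w hw; exists s, y; split => //; apply: Hr.
  rewrite z7 -scalerBr normrZ gtr0_norm ?invr_gt0 //.
  by rewrite ltr_pdivrMl // mulrC.
have De : D e.
  by exists 1, z; split => //; rewrite invr1 scale1r /H subrr subr0.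
have Dadd u w : D u -> D w -> D (u + w).
  move=> [s1 [y1 [s1p Ty1 I1]]] [s2 [y2 [s2p Ty2 I2]]].
  have sp : 0 < s1 + s2 by rewrite addr_gt0.
  pose t := s1 / (s1 + s2).
  have ht : 0 < t < 1.
    apply/andP; split; first by rewrite divr_gt0.
    by rewrite ltr_pdivrMr // mul1r ltrDl.
  exists (s1 + s2), (t *: y1 + (1 - t) *: y2); split => //.
    by apply: Tcvx => //; apply/andP; split; lra.
  have -> : (s1 + s2)^-1 *: (u + w) = t *: (s1^-1 *: u) + (1 - t) *: (s2^-1 *: w).
    rewrite !scalerA scalerDr; congr (_ *: _ + _ *: _); rewrite /t; field.
      by apply/andP; split; rewrite gt_eqF.
    by apply/andP; split; rewrite gt_eqF.
  exact: Mconv.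
have Dsc s u : 0 < s -> D u -> D (s *: u).
  move=> sp [s1 [y1 [s1p Ty1 I1]]]; exists (s * s1), y1; split => //.
    exact: mulr_gt0.
  rewrite scalerA (_ : (s * s1)^-1 * s = s1^-1) //.
  by field; apply/andP; split; rewrite gt_eqF.
have nD0 : ~ D 0.
  move=> [s [y [sp Ty I0]]]; apply: nz; exists y; split => //.
  by apply/Iint; move: I0; rewrite scaler0 sub0r opprB.
have [c [cdual cpos]] := @sep_cone R Y D e Dop De Dadd Dsc nD0.
have cI d : I d -> 0 < c d.
  by move=> Id; apply: cpos; exists 1, z; split => //; rewrite invr1 scale1r /H subrr subr0.
have ceP := cI e Ie.
have cC k : C k -> 0 <= c k.
  move=> Ck; rewrite -oppr_le0; apply: (le0_of_lt (b := c e)) => s sp.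
  have := cI _ (IaddC e (s *: k) Ie (Cscale s k (ltW sp) Ck)).
  rewrite (dualD cdual) (dualZ cdual); lra.
have cG y : T v y -> c (G z) <= c (G y).
  move=> Ty; rewrite -subr_le0; apply: (le0_of_lt2 ceP) => s sp.
  have : D (s *: e + H y).
    by exists 1, y; split => //; rewrite invr1 scale1r addrK; exact: Iscale.
  move/cpos; rewrite (_ : H y = G y - G z) //.
  rewrite (dualD cdual) (dualZ cdual) (dualB cdual); lra.
have cGf y : c (G y) = beta * c (f x y) + (g y - g' x y) * c e.
  by rewrite Gform (dualD cdual) !(dualZ cdual).
exists c; split; first by split => // k; exact: cC.
split; first by exists e; rewrite gt_eqF.
move=> y Ty.
pose h := y - z.
have gzd := (gder z).2 h.
have key t : 0 < t < 1 ->
    g' x h - beta * (c (f x y) - c (f x z)) / c e <= t^-1 * (g (z + t *: h) - g z).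
  move=> ht; have tp : 0 < t by case/andP: ht.
  have yt : t *: y + (1 - t) *: z = z + t *: h.
    by rewrite /h scalerBl scale1r scalerBr addrCA.
  have Tyt : T v (t *: y + (1 - t) *: z).
    by apply: Tcvx => //; apply/andP; split; lra.
  have k1 := cG _ Tyt; rewrite !cGf in k1.
  have k2 : c (f x (t *: y + (1 - t) *: z)) <= t * c (f x y) + (1 - t) * c (f x z).
    have := cC _ (hB3 x y z t _); rewrite (dualB cdual) (dualD cdual) !(dualZ cdual).
    by move=> /(_ _) H0; have := H0 ltac:(apply/andP; split; lra); lra.
  rewrite yt in k1 k2.
  have k3 : g' x (z + t *: h) = g' x z + t * g' x h by rewrite (dualD gxd) (dualZ gxd).
  rewrite k3 in k1.
  have k2' := ler_wpM2l (ltW hbeta) k2.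
  have hk : t * (c e * g' x h - beta * (c (f x y) - c (f x z))) <=
      c e * (g (z + t *: h) - g z) by lra.
  rewrite -(ler_pM2l tp) mulrA mulfV ?gt_eqF // mul1r.
  rewrite -(ler_pM2l ceP).
  have -> : c e * (t * (g' x h - beta * (c (f x y) - c (f x z)) / c e)) =
      t * (c e * g' x h - beta * (c (f x y) - c (f x z))).
    by field; rewrite gt_eqF.
  exact: hk.
have L : g' x h - beta * (c (f x y) - c (f x z)) / c e <= g' z h.
  apply: (cvgr_to_ge (cvg_dnbhs_at_right gzd)).
  near=> t; apply: key; apply/andP; split.
    by near: t; exact: nbhs_right_gt.
  by near: t; exact: nbhs_right_lt ltr01.
set q := beta * _.
have hq : q = q / c e * c e by rewrite divfK // gt_eqF.
rewrite hq ler_pM2r //.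
have L' : g' x (y - z) - q / c e <= g' z (y - z) := L.
lra.
Unshelve. all: by end_near.
Qed.
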